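(* Let $\ell,n$ be integers with $0<\ell\le n$, and let $\mathcal H$ be a set of intervals that is $\ell$-powerful in $(0,n)$ and is minimal with this property (no proper subset of $\mathcal H$ is $\ell$-powerful in $(0,n)$). Then, writing $\mathcal H=\{(a_i,b_i):1\le i\le t\}$ in standard form, we have $a_j\ge b_i-\ell+2$ for all $i,j\in\{1,\dots,t\}$ with $j\ge i+2$.
   Context: An interval is a pair $(a,b)$ of integers with $a\le b$; its length is $b-a$. An interval $(a,b)$ captures $(c,d)$ if $a\le c\le d\le b$; a set $\mathcal H$ of intervals captures $(c,d)$ if some member of $\mathcal H$ captures $(c,d)$. For integers $0<\ell\le n$, a set $\mathcal H$ of intervals is $\ell$-powerful in $(0,n)$ if $0\le a\le b\le n$ for all $(a,b)\in\mathcal H$, and $\mathcal H$ captures every interval of length $\ell$ that is captured by $(0,n)$ (i.e. every $(h,h+\ell)$ with $0\le h\le n-\ell$). A standard form of a set $\mathcal H$ of intervals is an expression $\mathcal H=\{(a_i,b_i):1\le i\le t\}$ with $t\ge 1$, $0\le a_1<a_2<\dots<a_t\le n$ and $0\le b_1<b_2<\dots<b_t\le n$; such a form exists if and only if no member of $\mathcal H$ captures another distinct member. *)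

(* Defs.v *)
From mathcomp Require Import all_boot all_order all_algebra.
Set Implicit Arguments. Unset Strict Implicit. Unset Printing Implicit Defensive.
Import Order.TTheory GRing.Theory Num.Theory.
Local Open Scope ring_scope.

Definition iset := int * int -> Prop.

Definition captures (I J : int * int) : Prop :=
  I.1 <= J.1 /\ J.1 <= J.2 /\ J.2 <= I.2.

Definition set_captures (H : iset) (J : int * int) : Prop :=
  exists I, H I /\ captures I J.

Definition powerful (l n : int) (H : iset) : Prop :=
  (forall I, H I -> 0 <= I.1 /\ I.1 <= I.2 /\ I.2 <= n) /\
  (forall h : int, 0 <= h -> h <= n - l -> set_captures H (h, h + l)).

Definition minimal_powerful (l n : int) (H : iset) : Prop :=
  powerful l n H /\
  forall H' : iset, (forall I, H' I -> H I) -> powerful l n H' ->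
    forall I, H I -> H' I.

Definition standard_form (n : int) (H : iset) (t : nat) (a b : nat -> int) : Prop :=
  (1 <= t)%N /\
  (forall i : nat, (1 <= i)%N -> (i < t)%N -> a i < a i.+1 /\ b i < b i.+1) /\
  0 <= a 1%N /\ a t <= n /\ 0 <= b 1%N /\ b t <= n /\
  (forall I, H I <-> exists2 i : nat, (1 <= i <= t)%N & I = (a i, b i)).

(* Main.v *)
Require Import Defs.
From Stdlib Require Import Classical ClassicalEpsilon.
From mathcomp Require Import all_boot all_order all_algebra.
From mathcomp Require Import zify.
Import Order.TTheory GRing.Theory Num.Theory.
Local Open Scope ring_scope.

Lemma witness l n H I : minimal_powerful l n H -> H I ->
  exists h, [/\ 0 <= h, h <= n - l, captures I (h,h+l) &
    forall J, H J -> captures J (h,h+l) -> J = I].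
Proof.
move=> [[Hb Hc] Hmin] HI.
apply: NNPP => Hno.
have: (fun J => H J /\ J <> I) I.
{ apply: (Hmin (fun J => H J /\ J <> I)) => //; first by move=> J [].
  split; first by move=> J [/Hb].
  move=> h h0 hn. have [J [HJ cJ]] := Hc h h0 hn.
  case: (classic (J = I)) => [eJ|nJ]; last by exists J.
  subst J. apply: NNPP => Hn. apply: Hno. exists h; split => //.
  move=> J' HJ' cJ'. apply: NNPP => nJ. apply: Hn. exists J'; split => //. }
by case.
Qed.

Lemma nocap l n H I J : minimal_powerful l n H -> H I -> H J ->
  captures I J -> I = J.
Proof.
move=> Hm HI HJ cIJ.
have [h [_ _ cJ u]] := witness _ _ _ _ Hm HJ.
apply: u => //. move: cIJ cJ.
rewrite /captures /=; lia.
Qed.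

Lemma chain l n H x y x' y' : minimal_powerful l n H -> H (x,y) -> H (x',y') ->
  x < x' -> y < y'.
Proof.
move=> Hm HI HJ lt. have [[Hb _] _] := Hm.
have := Hb _ HJ; rewrite /= => bJ.
rewrite ltNge; apply/negP => le.
have := nocap _ _ _ _ _ Hm HI HJ. rewrite /captures /= => /(_ ltac:(lia)) [e _]. lia.
Qed.

Lemma samefst l n H x y y' : minimal_powerful l n H -> H (x,y) -> H (x,y') ->
  y = y'.
Proof.
move=> Hm HI HJ. have [[Hb _] _] := Hm.
have := Hb _ HJ; have := Hb _ HI; rewrite /= => bI bJ.
case: (lerP y y') => le.
- by have := nocap _ _ _ _ _ Hm HJ HI; rewrite /captures /= => /(_ ltac:(lia)) [].
- by have := nocap _ _ _ _ _ Hm HI HJ; rewrite /captures /= => /(_ ltac:(lia)) [].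
Qed.

Lemma mono_gen (t : nat) (f : nat -> int) :
  (forall i : nat, (1 <= i)%N -> (i < t)%N -> f i < f i.+1) ->
  forall p q : nat, (1 <= p)%N -> (p < q)%N -> (q <= t)%N -> f p < f q.
Proof.
move=> m p; elim=> // q IH p1 pq qt.
case: (ltnP p q) => pq'.
- have := IH p1 pq' (ltnW qt). have := m q ltac:(lia) qt. lia.
- have -> : q = p by lia. apply: m => //; lia.
Qed.

Theorem mainTheorem4 (l n : int) (H : iset) :
  0 < l -> l <= n -> minimal_powerful l n H ->
  (exists t a b, standard_form n H t a b) /\
  (forall (t : nat) (a b : nat -> int), standard_form n H t a b ->
     forall i j : nat, (1 <= i)%N -> (j <= t)%N -> (i.+2 <= j)%N ->
       a j >= b i - l + 2).
Proof.
move=> l0 ln Hm; split.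
have [[Hb Hc] _] := Hm.
pose N := `|n|%N.
have nN : n = N%:Z by rewrite /N; lia.
pose pb (k : nat) : bool :=
  if excluded_middle_informative (exists y, H (k%:Z, y)) then true else false.
have pbP k : pb k <-> exists y, H (k%:Z, y).
  by rewrite /pb; case: excluded_middle_informative.
pose s := filter pb (iota 0 N.+1).
have memS k : k \in s <-> (exists y, H (k%:Z, y)) /\ (k <= N)%N.
  rewrite /s mem_filter mem_iota add0n ltnS leq0n /=; split.
    by case/andP => /pbP ? ->.
  by case => /pbP -> ->.
have srt : sorted ltn s.
  by apply: sorted_filter; [exact: ltn_trans| exact: iota_ltn_sorted].
pose t := size s.
pose a (i : nat) : int := (nth 0%N s i.-1)%:Z.
pose b (i : nat) : int := epsilon (inhabits 0) (fun y => H (a i, y)).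
have Hab i : (1 <= i <= t)%N -> H (a i, b i).
  move=> /andP [i1 it].
  have /memS [ex _] : nth 0%N s i.-1 \in s by apply: mem_nth; rewrite /t in it; move: i1 it; case: (i) => //=.
  exact: (epsilon_spec (inhabits 0) (fun y => H (a i, y)) ex).
have aN i : (1 <= i <= t)%N -> a i <= n.
  move=> /andP [i1 it].
  have /memS [_ le] : nth 0%N s i.-1 \in s by apply: mem_nth; rewrite /t in it; move: i1 it; case: (i) => //=.
  rewrite nN /a; lia.
have t1 : (1 <= t)%N.
  have h0 : (0:int) <= n - l by lia.
  have [[x y] [HJ0 cJ0]] := Hc 0 (lexx 0) h0.
  have bJ0 := Hb _ HJ0. rewrite /= in bJ0.
  have : `|x|%N \in s.
    apply/memS; split; last by rewrite /N; lia.
    exists y. have -> : (`|x|%N)%:Z = x by lia. exact: HJ0.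
  by rewrite /t; case: (s).
have amono i : (1 <= i)%N -> (i < t)%N -> a i < a i.+1.
  move=> i1 it. rewrite /a ltz_nat.
  have -> : i.+1.-1 = i by [].
  apply: (sorted_ltn_nth ltn_trans) => //; rewrite /t in it *; rewrite ?inE /=; lia.
exists t, a, b; split => //; split.
  move=> i i1 it; split; first exact: amono.
  apply: (chain _ _ _ _ _ _ _ Hm (Hab i _) (Hab i.+1 _)); try (apply/andP; lia).
  exact: amono.
split; first by rewrite /a.
split; first by apply: aN; apply/andP; lia.
have hb1 : H (a 1%N, b 1%N) by apply: Hab; apply/andP; lia.
have hbt : H (a t, b t) by apply: Hab; apply/andP; lia.
split; first by have := Hb _ hb1; move=> /= [? [? ?]]; lia.
split; first by have := Hb _ hbt; move=> /= [? [? ?]]; lia.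
move=> [x y]; split.
  move=> Hxy. have := Hb _ Hxy; rewrite /= => bxy.
  have ks : `|x|%N \in s.
    apply/memS; split; last by rewrite /N; lia.
    exists y. have -> : (`|x|%N)%:Z = x by lia. exact: Hxy.
  exists (index `|x|%N s).+1.
    by apply/andP; split => //; rewrite /t index_mem.
  have ea : a (index `|x|%N s).+1 = x by rewrite /a /= nth_index //; lia.
  have Hi : H (a (index `|x|%N s).+1, b (index `|x|%N s).+1) by apply: Hab; apply/andP; split => //; rewrite /t index_mem.
  rewrite ea in Hi. rewrite ea.
  by rewrite (samefst _ _ _ _ _ _ Hm Hxy Hi).
by case=> i ii [-> ->]; apply: Hab.
move=> t a b [t1 [mono [a1 [aT [b1 [bT Hiff]]]]]] i j i1 jt ij.
have ma := mono_gen t a (fun i i1 it => (mono i i1 it).1).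
have mb := mono_gen t b (fun i i1 it => (mono i i1 it).2).
have Hk : H (a i.+1, b i.+1) by apply/Hiff; exists i.+1 => //; lia.
have Hi : H (a i, b i) by apply/Hiff; exists i => //; lia.
have Hj : H (a j, b j) by apply/Hiff; exists j => //; lia.
have [h [h0 hn cK u]] := witness _ _ _ _ Hm Hk.
have aik := ma i i.+1 i1 (ltnSn i) ltac:(lia).
have akj := ma i.+1 j ltac:(lia) ltac:(lia) jt.
have bkj := mb i.+1 j ltac:(lia) ltac:(lia) jt.
move: cK; rewrite /captures /= => cK.
have hb : b i < h + l.
  rewrite ltNge; apply/negP => le.
  have := u _ Hi; rewrite /captures /= => /(_ ltac:(lia)) [e _]; lia.
rewrite leNgt; apply/negP => lt.
have := u _ Hj; rewrite /captures /= => /(_ ltac:(lia)) [e _]; lia.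
Qed.
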